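(* If $T$ is a tree with $n$ vertices, then $\nu^*(P_n)\le \nu^*(T)\le \nu^*(K_{1,n-1})$.
   Context: For a finite simple graph $G=(V,E)$ with $\ell=|V|+|E|$, a construction sequence (c-sequence) is a bijection $x:\{1,\dots,\ell\}\to V\sqcup E$ such that every edge $e=uw$ satisfies $x^{-1}(e)>\max\{x^{-1}(u),x^{-1}(w)\}$. The cost of $x$ is $\nu(x)=\sum_{e=uw\in E}\big(2x^{-1}(e)-x^{-1}(u)-x^{-1}(w)\big)$, and $\nu^*(G)$ is the maximum of $\nu(x)$ over all c-sequences for $G$. $P_n$ is the path on $n$ vertices and $K_{1,n-1}$ is the star with a hub adjacent to $n-1$ leaves. *)

(* Defs.v *)
From HB Require Import structures.
From mathcomp Require Import all_boot.
Set Warnings "-notation-overridden".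
Set Implicit Arguments. Unset Strict Implicit. Unset Printing Implicit Defensive.

Definition simple_graph (V : finType) (E : {set {set V}}) : Prop :=
  forall e, e \in E -> #|e| = 2.

Definition adj (V : finType) (E : {set {set V}}) : rel V :=
  fun u w => (u != w) && ([set u; w] \in E).

Definition connected_graph (V : finType) (E : {set {set V}}) : Prop :=
  forall u w : V, connect (adj E) u w.

Definition acyclic (V : finType) (E : {set {set V}}) : Prop :=
  ~ exists p : seq V, [/\ 3 <= size p, uniq p & cycle (adj E) p].

Definition is_tree (V : finType) (E : {set {set V}}) : Prop :=
  simple_graph E /\ connected_graph E /\ acyclic E.

Definition edge (V : finType) (E : {set {set V}}) := {e : {set V} | e \in E}.

Definition elem (V : finType) (E : {set {set V}}) := (V + edge E)%type.

Definition ell (V : finType) (E : {set {set V}}) := #|V| + #|E|.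

(* pos = x^{-1} shifted by one: element z sits at position (pos z + 1) in
   {1,...,ell}.  A c-sequence x is a bijection 'I_ell -> V ⊔ E, equivalently
   its inverse pos is an injection V ⊔ E -> 'I_ell (the cardinalities agree). *)
Definition is_cseq (V : finType) (E : {set {set V}})
  (pos : {ffun elem E -> 'I_(ell E)}) : bool :=
  injectiveb pos &&
  [forall e : edge E, forall u : V, (u \in val e) ==> (pos (inl u) < pos (inr e))].

Definition cost (V : finType) (E : {set {set V}})
  (pos : {ffun elem E -> 'I_(ell E)}) : nat :=
  \sum_(e : edge E)
     (2 * (pos (inr e)).+1 - \sum_(u in val e) (pos (inl u)).+1).

Definition nu_star (V : finType) (E : {set {set V}}) : nat :=
  \max_(pos : {ffun elem E -> 'I_(ell E)} | is_cseq pos) cost pos.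

Definition path_edges (n : nat) : {set {set 'I_n}} :=
  [set e : {set 'I_n} | [exists i : 'I_n, exists j : 'I_n,
     ((j : nat) == (i : nat).+1) && (e == [set i; j])]].

Definition star_edges (n : nat) : {set {set 'I_n}} :=
  [set e : {set 'I_n} | [exists i : 'I_n, exists j : 'I_n,
     [&& (i : nat) == 0, (j : nat) != 0 & e == [set i; j]]]].

(* Main.v *)
Require Import Defs.
From mathcomp Require Import all_boot zify.
Set Implicit Arguments. Unset Strict Implicit. Unset Printing Implicit Defensive.


Lemma sorted_ltn_sum (t : seq nat) (a : nat) :
  sorted ltn t -> all (fun x => a <= x) t ->
  \sum_(i < size t) (a + i) <= \sum_(x <- t) x.
Proof.
elim: t a => [|x t IH] a /=; first by rewrite big_ord0.
move=> Hp /andP[Hax Ha].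
rewrite big_ord_recl big_cons addn0.
have Hs : sorted ltn t by case: t Hp {IH Ha} => //= y t /andP[].
have Hall : all (fun y => a.+1 <= y) t.
  have := order_path_min ltn_trans Hp.
  apply: sub_all => y /= Hy; exact: leq_ltn_trans Hax Hy.
have := IH a.+1 Hs Hall.
move=> H; apply: leq_add Hax _; apply: leq_trans H.
by apply: leq_sum => i _; rewrite lift0; lia.
Qed.

Lemma sum_uniq_ge (s : seq nat) :
  uniq s -> \sum_(i < size s) i <= \sum_(x <- s) x.
Proof.
move=> Hu.
have Hp : perm_eq (sort leq s) s by rewrite perm_sort.
rewrite -(perm_big _ Hp) -(perm_size Hp).
have Hs : sorted ltn (sort leq s).
  by rewrite ltn_sorted_uniq_leq sort_uniq Hu sort_sorted //; exact: leq_total.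
have := sorted_ltn_sum (a:=0) Hs.
rewrite (_ : all _ _ = true); last by apply/allP.
by move/(_ isT).
Qed.

Lemma units_lemma (u : seq nat) (a : nat) :
  all (fun x => 0 < x) u ->
  \sum_(i < size u) nth 0 u i * (a + i) <= \sum_(k < sumn u) (a + k).
Proof.
elim: u a => [|x u IH] a /=; first by rewrite big_ord0.
move=> /andP[Hx Hu].
rewrite big_ord_recl /= addn0.
rewrite (big_split_ord _ (m:=x) (n:=sumn u)) /=.
apply: leq_add.
  rewrite -[x in x * _]card_ord -sum1_card big_distrl /=.
  by apply: leq_sum => i _; rewrite mul1n leq_addr.
apply: leq_trans (leq_trans _ (IH a.+1 Hu)) _.
  by apply: leq_sum => i _; rewrite /bump leq0n add0n add1n addnS addSn.
apply: leq_sum => i _.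
rewrite /=; lia.
Qed.


Definition deg (V : finType) (E : {set {set V}}) (v : V) : nat :=
  \sum_(e : edge E) (v \in val e).

Lemma exch (V : finType) (E : {set {set V}}) (F : V -> nat) :
  \sum_(e : edge E) \sum_(u in val e) F u = \sum_v deg E v * F v.
Proof.
rewrite (eq_bigr (fun e : edge E => \sum_u (if u \in val e then F u else 0)));
  last by move=> e _; rewrite big_mkcond.
rewrite exchange_big; apply: eq_bigr => v _.
rewrite /deg big_distrl /=; apply: eq_bigr => e _.
by case: (v \in val e); rewrite ?mul1n ?mul0n.
Qed.

Lemma card_edge (V : finType) (E : {set {set V}}) : #|{: edge E}| = #|E|.
Proof. by rewrite card_sig; apply: eq_card. Qed.

Lemma cost_id (V : finType) (E : {set {set V}}) (pos : {ffun elem E -> 'I_(ell E)}) :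
  simple_graph E -> is_cseq pos ->
  cost pos + \sum_v deg E v * pos (inl v) = 2 * \sum_(e : edge E) pos (inr e).
Proof.
move=> Hs /andP[_ /forallP Hall].
rewrite /cost -(exch E (fun u => nat_of_ord (pos (inl u)))) -big_split big_distrr /=.
apply: eq_bigr => e _.
have He : #|val e| = 2 by apply: Hs; exact: (valP e).
have Hsum : \sum_(u in val e) (pos (inl u)).+1 = \sum_(u in val e) pos (inl u) + 2.
  by rewrite -He -sum1_card -big_split /=; apply: eq_bigr => u _; rewrite addn1.
have Hle : \sum_(u in val e) pos (inl u) <= 2 * pos (inr e).
  apply: leq_trans (_ : \sum_(u in val e) (pos (inr e) : nat) <= _).
    apply: leq_sum => u Hu; apply: ltnW.
    by have := Hall e => /forallP /(_ u) /implyP /(_ Hu).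
  by rewrite sum_nat_const He.
rewrite Hsum; move: Hle; set X := (\sum_(u in val e) _); set Y := nat_of_ord (pos (inr e)); move: Y => Y; lia.
Qed.

Lemma sum_bij (T : finType) m (f : T -> 'I_m) (F : nat -> nat) :
  injective f -> #|T| = m -> \sum_x F (f x) = \sum_(i < m) F i.
Proof.
move=> Hf Hc; symmetry; rewrite (reindex f) //.
apply: onW_bij; apply: inj_card_bij => //; by rewrite card_ord Hc.
Qed.

Lemma tot (V : finType) (E : {set {set V}}) (pos : {ffun elem E -> 'I_(ell E)}) :
  is_cseq pos ->
  \sum_v pos (inl v) + \sum_(e : edge E) pos (inr e) = \sum_(i < ell E) i.
Proof.
move=> /andP[/injectiveP Hi _].
rewrite -(big_sumType _ xpredT (fun z => nat_of_ord (pos z))).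
apply: (@sum_bij _ _ _ id) => //.
by rewrite card_sum card_edge.
Qed.

Lemma bot_le (T : finType) (A : {pred T}) (f : T -> nat) :
  {in A &, injective f} -> \sum_(i < #|A|) i <= \sum_(x in A) f x.
Proof.
move=> Hf.
have Hu : uniq [seq f i | i <- enum A].
  rewrite map_inj_in_uniq ?enum_uniq //.
  by move=> x y; rewrite !mem_enum; exact: Hf.
by have := sum_uniq_ge Hu; rewrite size_map -cardE big_map big_enum.
Qed.

Lemma G1 (V : finType) (E : {set {set V}}) (pos : {ffun elem E -> 'I_(ell E)}) :
  simple_graph E -> (forall v, 0 < deg E v) -> is_cseq pos ->
  cost pos + 3 * \sum_(i < #|V|) i <= 2 * \sum_(i < ell E) i.
Proof.
move=> Hs Hd Hc.
have H1 := cost_id Hs Hc.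
have H2 := tot Hc.
have H3 : \sum_(i < #|V|) i <= \sum_v pos (inl v).
  have := @bot_le V V (fun v => nat_of_ord (pos (inl v))).
  apply; move=> x y _ _ /eqP; rewrite (inj_eq val_inj) => /eqP.
  by move: Hc => /andP[/injectiveP Hi _] /Hi [].
have H4 : \sum_v (pos (inl v) : nat) <= \sum_v deg E v * pos (inl v).
  by apply: leq_sum => v _; apply: leq_pmull.
lia.
Qed.

Lemma vpos_lt (V : finType) (E : {set {set V}}) k : k < #|V| -> k < ell E.
Proof. by move=> H; apply: leq_trans H (leq_addr _ _). Qed.

Lemma epos_lt (V : finType) (E : {set {set V}}) (e : edge E) : #|V| + enum_rank e < ell E.
Proof. by rewrite /ell ltn_add2l -card_edge ltn_ord. Qed.

Definition canon (V : finType) (E : {set {set V}}) (s : seq V)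
  (Hs : forall v, index v s < #|V|) : {ffun elem E -> 'I_(ell E)} :=
  [ffun z => match z with
             | inl v => Ordinal (vpos_lt E (Hs v))
             | inr e => Ordinal (epos_lt e) end].

Lemma canon_cseq (V : finType) (E : {set {set V}}) (s : seq V)
  (Hs : forall v, index v s < #|V|) : perm_eq s (enum V) -> is_cseq (canon E Hs).
Proof.
move=> Hp; apply/andP; split.
  apply/injectiveP => [[v|e] [w|f]]; rewrite !ffunE => /(congr1 val) /= H.
  - congr inl; apply: (index_inj v) H; by rewrite (perm_mem Hp) mem_enum.
  - by have := Hs v; rewrite H ltnNge leq_addr.
  - by have := Hs w; rewrite -H ltnNge leq_addr.
  - by congr inr; apply: enum_rank_inj; apply: val_inj; apply: addnI H.
apply/forallP => e; apply/forallP => u; apply/implyP => _; rewrite !ffunE /=.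
by apply: leq_trans (Hs u) (leq_addr _ _).
Qed.

Lemma canon_cost (V : finType) (E : {set {set V}}) (s : seq V)
  (Hs : forall v, index v s < #|V|) : simple_graph E -> perm_eq s (enum V) ->
  cost (canon E Hs) + \sum_v deg E v * index v s + 2 * \sum_(i < #|V|) i
  = 2 * \sum_(i < ell E) i.
Proof.
move=> Hg Hp.
have H1 := cost_id Hg (canon_cseq E Hs Hp).
have -> : \sum_v deg E v * index v s = \sum_v deg E v * canon E Hs (inl v).
  by apply: eq_bigr => v _; rewrite ffunE.
rewrite H1 -mulnDr; congr (2 * _).
have -> : \sum_(e : edge E) (canon E Hs (inr e) : nat) = \sum_(e : edge E) (#|V| + enum_rank e).
  by apply: eq_bigr => e _; rewrite ffunE.
rewrite (@sum_bij (edge E) _ (@enum_rank (edge E)) (fun i => #|V| + i) enum_rank_inj erefl).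
rewrite /ell big_split_ord /= addnC card_edge; congr (_ + _).
Qed.


Lemma adj_sym (V : finType) (E : {set {set V}}) u w : adj E u w = adj E w u.
Proof. by rewrite /adj eq_sym setUC. Qed.

Lemma adj_neq (V : finType) (E : {set {set V}}) u w : adj E u w -> u != w.
Proof. by case/andP. Qed.


Lemma conn_grow (V : finType) (E : {set {set V}}) (r : V) :
  connected_graph E -> forall k, k < #|V| ->
  exists (S : {set V}) (F : {set {set V}}),
    [/\ r \in S, #|S| = k.+1, F \subset E, #|F| = k &
        forall e, e \in F -> e \subset S].
Proof.
move=> Hc; elim=> [|k IH] Hk.
  exists [set r], set0; split; rewrite ?cards1 ?cards0 ?set11 ?sub0set //.
  by move=> e; rewrite in_set0.
have [S [F [HrS HS HFE HF HFS]]] := IH (ltnW Hk).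
case: (boolP [exists a, exists b, [&& a \in S, b \notin S & adj E a b]]).
  move=> /existsP [a /existsP [b /and3P [HaS HbS Hab]]].
  have HabE : [set a; b] \in E by case/andP: Hab.
  have HabF : [set a; b] \notin F.
    apply/negP => /HFS /subsetP /(_ b); rewrite !inE eqxx orbT => /(_ isT).
    by rewrite (negbTE HbS).
  exists (b |: S), ([set a; b] |: F); split.
  - by rewrite !inE HrS orbT.
  - by rewrite cardsU1 HbS HS.
  - by rewrite subUset sub1set HabE HFE.
  - by rewrite cardsU1 HabF HF.
  move=> e; rewrite !inE => /orP [/eqP -> | /HFS HeS].
    apply/subsetP => u; rewrite !inE => /orP [/eqP -> | /eqP ->].
      by rewrite HaS orbT.
    by rewrite eqxx.
  by apply: subset_trans HeS _; apply/subsetP => u Hu; rewrite !inE Hu orbT.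
move=> Hno.
have [w Hw] : exists w, w \in ~: S.
  apply/card_gt0P; have := cardsC S; lia.
have Hcl : closed (adj E) S.
  have H1 : forall x y, adj E x y -> x \in S -> y \in S.
    move=> x y Hxy HxS; apply/negPn/negP => HyS; move/negP: Hno; apply.
    by apply/existsP; exists x; apply/existsP; exists y; rewrite HxS HyS Hxy.
  move=> x y Hxy; apply/idP/idP; first exact: H1.
  by apply: H1; rewrite adj_sym.
have := closed_connect Hcl (Hc r w); rewrite HrS; move: Hw; rewrite inE => /negbTE -> //.
Qed.

Lemma conn_edges (V : finType) (E : {set {set V}}) :
  connected_graph E -> 0 < #|V| -> #|V| - 1 <= #|E|.
Proof.
move=> Hc /card_gt0P [r _].
have [|S [F [_ _ HFE HF _]]] := conn_grow r Hc (k := #|V| - 1).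
  have : 0 < #|V| by apply/card_gt0P; exists r.
  lia.
by rewrite -HF; apply: subset_leq_card.
Qed.


Lemma no_mindeg2 (V : finType) (E : {set {set V}}) (S : {set V}) :
  acyclic E -> S != set0 ->
  ~ (forall v, v \in S -> exists a b, [/\ a != b, a \in S, b \in S, adj E v a & adj E v b]).
Proof.
move=> Hac /set0Pn [v0 Hv0] Hd.
pose P k := [exists t : k.-tuple V, [&& uniq t, all (mem S) t & sorted (adj E) t]].
have exP : exists k, P k.
  exists 1; apply/existsP; exists [tuple v0] => /=; by rewrite Hv0.
have ubP : forall k, P k -> k <= #|V|.
  move=> k /existsP [t /and3P [Hu _ _]].
  by rewrite -(size_tuple t) -(card_uniqP Hu) max_card.
case: (ex_maxnP exP ubP) => k /existsP [t /and3P [Hu Hall Hsort]] Hmax.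
have Hk1 : 1 <= k by apply: Hmax; apply/existsP; exists [tuple v0] => /=; rewrite Hv0.
case Ht: (tval t) Hu Hall Hsort => [|x t'].
  by move: (size_tuple t); rewrite Ht => Hk0; move: Hk1; rewrite -Hk0.
move=> Hu Hall Hsort.
have HxS : x \in S by move: Hall => /= /andP [].
have [y [HyS Hxy Hyz]] : exists y, [/\ y \in S, adj E x y &
    (if t' is z :: _ then y != z else true)].
  have [a [b [Hab HaS HbS Hxa Hxb]]] := Hd x HxS.
  case: t' {Hu Hall Hsort Ht} => [|z t'']; first by exists a.
  case: (eqVneq a z) => [Haz|Haz]; last by exists a.
  by exists b; split => //; rewrite -Haz eq_sym.
case: (boolP (y \in x :: t')) => Hyt.
  have Hyx : y != x by rewrite eq_sym; apply: adj_neq Hxy.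
  have Hyt' : y \in t' by move: Hyt; rewrite inE (negbTE Hyx).
  set i := index y t'.
  have Hi : i < size t' by rewrite index_mem.
  have Hi0 : 0 < i.
    rewrite /i; case: (t') Hyz Hyt' => [|z t''] //= Hyz _.
    by rewrite eq_sym (negbTE Hyz).
  apply: Hac; exists (x :: take i.+1 t'); split.
  - by rewrite /= size_takel.
  - by have := take_uniq i.+2 Hu.
  rewrite /= rcons_path (take_nth x Hi) last_rcons nth_index //.
  have Hp : path (adj E) x (take i.+1 t') by apply: take_path; exact: Hsort.
  by move: Hp; rewrite (take_nth x Hi) nth_index // => ->; rewrite adj_sym.
have : P k.+1.
  apply/existsP; exists [tuple of y :: t].
  rewrite /= Ht Hyt Hu HyS Hall /= adj_sym Hxy; exact: Hsort.
by move/Hmax; rewrite ltnn.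
Qed.

Lemma other_end (V : finType) (E : {set {set V}}) e v :
  simple_graph E -> e \in E -> v \in e -> exists a, a != v /\ e = [set v; a].
Proof.
move=> Hg He Hv; have /eqP/cards2P [x [y [Hxy Hexy]]] := Hg e He.
move: Hv; rewrite Hexy !inE => /orP [/eqP -> | /eqP ->].
  by exists y; rewrite eq_sym.
by exists x; split => //; rewrite setUC.
Qed.

Definition einS (V : finType) (E : {set {set V}}) (S : {set V}) :=
  [set e in E | e \subset S].

Lemma acyc_bound (V : finType) (E : {set {set V}}) :
  simple_graph E -> acyclic E -> forall S : {set V}, #|einS E S| <= #|S| - 1.
Proof.
move=> Hg Hac S; move Hn: #|S| => n; elim: n S Hn => [|n IH] S Hn.
  have -> : einS E S = set0; last by rewrite cards0.
  apply/setP => e; rewrite !inE; apply/negbTE/andP => [[He Hs]].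
  by have := subset_leq_card Hs; rewrite (Hg e He) Hn.
case: n IH Hn => [|n] IH Hn.
  have -> : einS E S = set0; last by rewrite cards0.
  apply/setP => e; rewrite !inE; apply/negbTE/andP => [[He Hs]].
  by have := subset_leq_card Hs; rewrite (Hg e He) Hn.
case: (boolP [exists v, (v \in S) && (#|[set e in einS E S | v \in e]| <= 1)]).
  move=> /existsP [v /andP [HvS Hv1]].
  have HSv : #|S :\ v| = n.+1 by move: Hn; rewrite (cardsD1 v) HvS add1n => [[]].
  have := IH _ HSv.
  have Hsub : einS E S \subset einS E (S :\ v) :|: [set e in einS E S | v \in e].
    apply/subsetP => e He; rewrite in_setU.
    case Hve: (v \in e); first by apply/orP; right; rewrite inE He Hve.
    apply/orP; left; move: He; rewrite !inE => /andP [-> HeS] /=.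
    by rewrite subsetD1 HeS Hve.
  have := subset_leq_card Hsub.
  have := cardsU (einS E (S :\ v)) [set e in einS E S | v \in e].
  lia.
move=> Hno; exfalso.
apply: (no_mindeg2 (S := S) Hac).
  by apply/set0Pn/card_gt0P; rewrite Hn.
move=> v HvS.
have Hv2 : 1 < #|[set e in einS E S | v \in e]|.
  rewrite ltnNge; apply/negP => H; move/negP: Hno; apply.
  by apply/existsP; exists v; rewrite HvS H.
move: Hv2 => /card_gt1P [e1 [e2 [He1 He2 He12]]].
move: He1 He2; rewrite !inE => /andP [/andP [He1 HeS1] Hv1] /andP [/andP [He2 HeS2] Hv2].
have [a [Hav Hea]] := other_end Hg He1 Hv1.
have [b [Hbv Heb]] := other_end Hg He2 Hv2.
exists a, b; split.
- by apply: contraNneq He12 => Hab; rewrite Hea Heb Hab.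
- by apply: (subsetP HeS1); rewrite Hea !inE eqxx orbT.
- by apply: (subsetP HeS2); rewrite Heb !inE eqxx orbT.
- by rewrite /adj eq_sym Hav -Hea.
- by rewrite /adj eq_sym Hbv -Heb.
Qed.

Lemma tree_edges (V : finType) (E : {set {set V}}) :
  0 < #|V| -> is_tree E -> #|E| = #|V| - 1.
Proof.
move=> H0 [Hg [Hc Hac]].
have H1 := conn_edges Hc H0.
have H2 := acyc_bound Hg Hac setT.
have HT : einS E setT = E by apply/setP => e; rewrite !inE subsetT andbT.
rewrite HT in H2.
rewrite cardsT in H2; lia.
Qed.


Lemma deg_pos (V : finType) (E : {set {set V}}) :
  connected_graph E -> 1 < #|V| -> forall v, 0 < deg E v.
Proof.
move=> Hc /card_gt1P [x [y [_ _ Hxy]]] v.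
have [w Hwv] : exists w, w != v.
  case: (eqVneq x v) => [Exv|]; last by exists x.
  by exists y; rewrite -Exv eq_sym.
have /connectP [p Hp Hw] := Hc v w.
case: p Hp Hw => [|z p] /=; first by move=> _ Hw; rewrite Hw eqxx in Hwv.
move=> /andP [/andP [_ Hvz] _] _.
rewrite /deg (bigD1 (exist (fun e => e \in E) _ Hvz : edge E)) //= !inE eqxx.
by rewrite add1n.
Qed.

Lemma handshake (V : finType) (E : {set {set V}}) :
  simple_graph E -> \sum_v deg E v = 2 * #|E|.
Proof.
move=> Hg.
have H : \sum_(e : edge E) \sum_(u in val e) 1 = \sum_v deg E v * 1 := exch E (fun _ => 1).
have L : \sum_(e : edge E) \sum_(u in val e) 1 = 2 * #|E|.
  rewrite (eq_bigr (fun _ => 2)); first by rewrite sum_nat_const card_edge mulnC.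
  by move=> e _; rewrite sum1_card (Hg _ (valP e)).
rewrite -L H; apply: eq_bigr => v _; by rewrite muln1.
Qed.

Lemma nu0 (V : finType) (E : {set {set V}}) : E = set0 -> nu_star E = 0.
Proof.
move=> HE; apply/eqP; rewrite -leqn0; apply/bigmax_leqP => pos _.
rewrite leqn0 /cost; apply/eqP; apply: big1 => e _.
have : val e \in (set0 : {set {set V}}) by rewrite -HE; exact: valP e.
by rewrite in_set0.
Qed.

Lemma sum_edge (V : finType) (E : {set {set V}}) (F : {set V} -> nat) :
  \sum_(e : edge E) F (val e) = \sum_(e in E) F e.
Proof.
transitivity (\sum_(e in [set val x | x : edge E]) F e).
  rewrite big_imset /=; last by move=> x y _ _; exact: val_inj.
  by apply: eq_bigl => x; rewrite inE.
apply: eq_bigl => e; apply/imsetP/idP => [[x _ ->]|He]; first exact: valP.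
by exists (exist (fun e => e \in E) e He).
Qed.

Lemma sum_pair (V : finType) (a b : V) (F : V -> nat) :
  a != b -> \sum_(u in [set a; b]) F u = F a + F b.
Proof.
by move=> Hab; rewrite big_setU1 ?big_set1 // inE.
Qed.

Lemma star_struct m :
  star_edges m.+1 = [set [set ord0; j] | j in [set j : 'I_m.+1 | j != ord0]].
Proof.
apply/setP => e; rewrite inE; apply/idP/imsetP.
  move=> /existsP [i /existsP [j /and3P [Hi Hj /eqP ->]]].
  have -> : i = ord0 by apply: val_inj; apply/eqP.
  exists j => //; rewrite inE; apply: contraNneq Hj => ->; done.
move=> [j]; rewrite inE => Hj ->.
apply/existsP; exists ord0; apply/existsP; exists j; apply/and3P; split => //.
Qed.

Lemma star_inj m :
  {in [set j : 'I_m.+1 | j != ord0] &, injective (fun j => [set ord0; j])}.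
Proof.
move=> i j; rewrite !inE => Hi Hj /setP /(_ i); rewrite !inE eqxx orbT.
by move=> /esym /orP [/eqP H|/eqP //]; rewrite H eqxx in Hi.
Qed.

Lemma star_card m : #|star_edges m.+1| = m.
Proof.
rewrite star_struct card_in_imset; last exact: star_inj.
have -> : [set j : 'I_m.+1 | j != ord0] = [set~ ord0] by apply/setP => j; rewrite !inE.
by rewrite cardsC1 card_ord.
Qed.


Lemma nu_ge (V : finType) (E : {set {set V}}) (pos : {ffun elem E -> 'I_(ell E)}) :
  is_cseq pos -> cost pos <= nu_star E.
Proof. by move=> H; apply: (leq_bigmax_cond (F := @cost V E) pos H). Qed.

Lemma nu_le (V : finType) (E : {set {set V}}) c :
  (forall pos : {ffun elem E -> 'I_(ell E)}, is_cseq pos -> cost pos <= c) -> nu_star E <= c.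
Proof. by move=> H; apply/bigmax_leqP. Qed.

Lemma index_enum_ord n (v : 'I_n) : index v (enum 'I_n) = v.
Proof.
by rewrite -{1}(nth_ord_enum v v) index_uniq ?enum_uniq // size_enum_ord.
Qed.

Lemma Hs_star n : forall v : 'I_n, index v (enum 'I_n) < #|'I_n|.
Proof. by move=> v; rewrite index_enum_ord card_ord. Qed.

Lemma star_W m :
  \sum_(v : 'I_m.+1) deg (star_edges m.+1) v * index v (enum 'I_m.+1) = \sum_(i < m.+1) i.
Proof.
under eq_bigr => v _ do rewrite index_enum_ord.
have HX := exch (star_edges m.+1) (fun v : 'I_m.+1 => nat_of_ord v).
rewrite -HX.
rewrite (sum_edge (star_edges m.+1) (fun e => \sum_(u in e) (u : nat))).
rewrite star_struct big_imset; last exact: star_inj.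
rewrite [RHS](bigD1 ord0) //= add0n.
apply: eq_big => j; first by rewrite inE.
rewrite inE => Hj; rewrite sum_pair //; by rewrite eq_sym.
Qed.

Lemma star_lower m :
  2 * \sum_(i < m.+1 + m) i <= 3 * \sum_(i < m.+1) i + nu_star (star_edges m.+1).
Proof.
have Hg : simple_graph (star_edges m.+1).
  move=> e; rewrite star_struct => /imsetP [j]; rewrite inE => Hj ->.
  by rewrite cards2 eq_sym Hj.
have Hp : perm_eq (enum 'I_m.+1) (enum 'I_m.+1) by [].
have H := canon_cost (Hs_star (n:=m.+1)) Hg Hp.
have Hc := canon_cseq (star_edges m.+1) (Hs_star (n:=m.+1)) Hp.
have Hle := nu_ge Hc.
move: H Hle; rewrite star_W /ell card_ord star_card => H Hle.
move: H Hle; set X := \sum_(i < m.+1 + m) i; set Y := \sum_(i < m.+1) i; set Z := cost _. lia.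
Qed.


Definition ph m (i : 'I_m.+1) : {set 'I_m.+2} := [set inord i; inord i.+1].

Lemma inord_eq m k l : k < m.+1 -> l < m.+1 -> (inord k == inord l :> 'I_m.+1) = (k == l).
Proof.
move=> Hk Hl; apply/eqP/eqP => [/(congr1 val)|->//]; by rewrite /= !inordK.
Qed.

Lemma ph_inj m : injective (@ph m).
Proof.
move=> i j; rewrite /ph => /setP H.
have Hi := H (inord i); have Hj := H (inord j).
rewrite !inE eqxx /= in Hi Hj.
have Hi1 : i < m.+2 by apply: leq_trans (ltn_ord i) _.
have Hj1 : j < m.+2 by apply: leq_trans (ltn_ord j) _.
have Hi2 : i.+1 < m.+2 by rewrite ltnS.
have Hj2 : j.+1 < m.+2 by rewrite ltnS.
rewrite !inord_eq // in Hi Hj.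
apply: val_inj => /=.
move: Hi Hj; rewrite eqxx /= => /esym /orP [/eqP|/eqP] Hi /orP [/eqP|/eqP] Hj; lia.
Qed.

Lemma path_struct m : path_edges m.+2 = [set ph i | i : 'I_m.+1].
Proof.
apply/setP => e; rewrite inE; apply/idP/imsetP.
  move=> /existsP [i /existsP [j /andP [/eqP Hj /eqP ->]]].
  have Hi : i < m.+1 by have := ltn_ord j; rewrite Hj ltnS.
  exists (Ordinal Hi) => //; rewrite /ph /=.
  congr [set _; _]; apply: val_inj; rewrite /= inordK //; lia.
move=> [i _ ->]; apply/existsP; exists (inord i); apply/existsP; exists (inord i.+1).
rewrite /ph eqxx andbT !inordK //; have := ltn_ord i; lia.
Qed.

Lemma path_card m : #|path_edges m.+2| = m.+1.
Proof. by rewrite path_struct card_imset ?card_ord //; exact: ph_inj. Qed.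

Lemma path_simple m : simple_graph (path_edges m.+2).
Proof.
move=> e; rewrite path_struct => /imsetP [i _ ->].
have := ltn_ord i => Hi.
by rewrite /ph cards2 inord_eq ?(ltn_eqF (ltnSn i)) //; lia.
Qed.

Lemma path_sum m (F : 'I_m.+2 -> nat) :
  \sum_(e in path_edges m.+2) \sum_(u in e) F u = \sum_(i < m.+1) (F (inord i) + F (inord i.+1)).
Proof.
rewrite path_struct big_imset /=; last by move=> x y _ _; exact: ph_inj.
apply: eq_bigr => i _; rewrite /ph sum_pair //.
rewrite inord_eq ?(ltn_eqF (ltnSn i)) //; have := ltn_ord i; lia.
Qed.

Lemma path_upper m (pos : {ffun elem (path_edges m.+2) -> 'I_(ell (path_edges m.+2))}) :
  is_cseq pos ->
  cost pos + 3 * \sum_(i < m.+2) i + \sum_(i < m) i <= 2 * \sum_(i < m.+2 + m.+1) i.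
Proof.
move=> Hc.
have Hg : simple_graph (path_edges m.+2) := @path_simple m.
have H1 := cost_id Hg Hc.
have H2 := tot Hc.
have Hinj : injective pos by case/andP: Hc => /injectiveP.
pose g k := (pos (inl (inord k)) : nat).
have Hg_inj : forall a b, a < m.+2 -> b < m.+2 -> g a = g b -> a = b.
  move=> a b Ha Hb /val_inj /Hinj [] /(congr1 val); rewrite /= !inordK //.
have HB : \sum_v (pos (inl v) : nat) = \sum_(k < m.+2) g k.
  by apply: eq_bigr => v _; rewrite /g inord_val.
have HW : \sum_v deg (path_edges m.+2) v * pos (inl v) = \sum_(i < m.+1) (g i + g i.+1).
  rewrite -(exch (path_edges m.+2) (fun v => nat_of_ord (pos (inl v)))).
  rewrite (sum_edge (path_edges m.+2) (fun e => \sum_(u in e) (pos (inl u) : nat))).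
  exact: path_sum.
have HBs : \sum_(k < m.+2) g k = g 0 + \sum_(i < m) g i.+1 + g m.+1.
  rewrite big_ord_recr /= big_ord_recl /=.
  by congr (_ + _ + _); apply: eq_bigr => i _; rewrite /bump leq0n add1n.
have HWs : \sum_(i < m.+1) (g i + g i.+1) = g 0 + 2 * \sum_(i < m) g i.+1 + g m.+1.
  rewrite big_split /= [X in X + _]big_ord_recl [X in _ + X]big_ord_recr /=.
  have -> : \sum_(i < m) g (bump 0 i) = \sum_(i < m) g i.+1.
    by apply: eq_bigr => i _; rewrite /bump leq0n add1n.
  lia.
have HBb : \sum_(i < m.+2) i <= \sum_(k < m.+2) g k.
  rewrite -HB; have := @bot_le 'I_m.+2 'I_m.+2 (fun v => nat_of_ord (pos (inl v))).
  rewrite card_ord; apply; move=> x y _ _ /val_inj /Hinj; by case.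
have HIb : \sum_(i < m) i <= \sum_(i < m) g i.+1.
  have := @bot_le 'I_m 'I_m (fun i => g i.+1).
  rewrite card_ord; apply; move=> x y _ _ /Hg_inj H; apply: val_inj.
  have Hx := ltn_ord x; have Hy := ltn_ord y.
  have Hx' : x.+1 < m.+2 by rewrite ltnS; apply: ltnW.
  have Hy' : y.+1 < m.+2 by rewrite ltnS; apply: ltnW.
  by case: (H Hx' Hy').
have Hell : ell (path_edges m.+2) = m.+2 + m.+1 by rewrite /ell card_ord path_card.
have HT : \sum_(i < ell (path_edges m.+2)) i = \sum_(i < m.+2 + m.+1) i by rewrite Hell.
move: H1 H2 HBb HIb.
rewrite HT HW HWs HB HBs.
set A := \sum_e _; set X := \sum_(i < m) g i.+1; set T := \sum_(i < _) i; set Y := \sum_(i < m.+2) i.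
set Z := \sum_(i < m) i.
lia.
Qed.


Lemma sum_mono a b : a <= b -> \sum_(i < a) i <= \sum_(i < b) i.
Proof.
move=> H; rewrite -(subnKC H) big_split_ord /=; exact: leq_addr.
Qed.

Lemma sum_t_bound (V : finType) (s1 s2 : seq V) (t : V -> nat) (x0 : V) M :
  uniq (s1 ++ s2) ->
  (forall v, v \in s1 -> 0 < t v) -> (forall v, v \in s2 -> t v = 0) ->
  \sum_(v <- s1 ++ s2) t v <= M ->
  \sum_(v <- s1 ++ s2) t v * index v (s1 ++ s2) <= \sum_(i < M) i.
Proof.
move=> Hu H1 H2 HM.
set s := s1 ++ s2.
rewrite (big_nth x0) big_mkord.
rewrite (eq_bigr (fun i : 'I_(size s) => t (nth x0 s i) * i)); last first.
  by move=> i _; rewrite index_uniq.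
rewrite /s size_cat big_split_ord /=.
rewrite [X in _ + X <= _]big1 ?addn0; last first.
  move=> i _; rewrite nth_cat ltnNge leq_addr /= addKn H2 //; exact: mem_nth.
pose u := [seq t v | v <- s1].
have Hpos : all (fun x => 0 < x) u.
  by apply/allP => x /mapP [v Hv ->]; apply: H1.
have Hsu : sumn u <= M.
  apply: leq_trans HM; rewrite sumnE big_map big_cat /=; exact: leq_addr.
apply: leq_trans (leq_trans (units_lemma 0 Hpos) (sum_mono Hsu)).
rewrite size_map; apply: eq_leq; apply: eq_bigr => i _.
rewrite nth_cat ltn_ord (nth_map x0) //.
Qed.

Lemma tree_lower (V : finType) (E : {set {set V}}) m :
  #|V| = m.+2 -> is_tree E ->
  2 * \sum_(i < m.+2 + m.+1) i <= nu_star E + 3 * \sum_(i < m.+2) i + \sum_(i < m) i.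
Proof.
move=> HV Ht.
have H0 : 0 < #|V| by rewrite HV.
have H1 : 1 < #|V| by rewrite HV.
have HE := tree_edges H0 Ht.
case: Ht => Hg [Hc Hac].
have Hd := deg_pos Hc H1.
have /card_gt0P [x0 _] : 0 < #|V| by rewrite HV.
pose a := fun v => 1 < deg E v.
pose s1 := [seq v <- enum V | a v].
pose s2 := [seq v <- enum V | predC a v].
pose s := s1 ++ s2.
have Hp : perm_eq s (enum V) by rewrite /s perm_filterC.
have Hs : forall v, index v s < #|V|.
  by move=> v; rewrite cardE -(perm_size Hp) index_mem (perm_mem Hp) mem_enum.
have H := canon_cost Hs Hg Hp.
have Hle := nu_ge (canon_cseq E Hs Hp).
have Hus : uniq s by rewrite (perm_uniq Hp) enum_uniq.
have Hp2 : perm_eq (index_enum V) s.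
  apply: uniq_perm; rewrite ?index_enum_uniq // => v.
  by rewrite mem_index_enum (perm_mem Hp) mem_enum.
pose t := fun v => deg E v - 1.
have Hsplit : \sum_v deg E v * index v s = \sum_v index v s + \sum_v t v * index v s.
  rewrite -big_split; apply: eq_bigr => v _; rewrite /t.
  by have := Hd v; case: (deg E v) => // d _; rewrite subn1 /= mulSn.
have Hinj : injective (fun v => Ordinal (Hs v)).
  move=> x y /(congr1 val) /= /(index_inj x0); apply; by rewrite (perm_mem Hp) mem_enum.
have Hidx : \sum_v index v s = \sum_(i < #|V|) i := @sum_bij V #|V| _ id Hinj erefl.
have Hsumt : \sum_v t v = m.
  have Hh := handshake Hg.
  have : \sum_(v : V) deg E v = \sum_(v : V) t v + \sum_(v : V) 1.
    rewrite -big_split; apply: eq_bigr => v _; rewrite /t /=; have := Hd v; lia.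
  rewrite sum1_card HV Hh HE HV; lia.
have Ht : \sum_v t v * index v s <= \sum_(i < m) i.
  rewrite (perm_big _ Hp2).
  apply: (@sum_t_bound V s1 s2 t x0) => //.
  - move=> v; rewrite mem_filter => /andP [Ha _]; rewrite /t; move: Ha; rewrite /a; lia.
  - move=> v; rewrite mem_filter => /andP [Ha _]; rewrite /t; move: Ha; rewrite /= /a; lia.
  by rewrite -(perm_big _ Hp2) Hsumt.
have Hell : ell E = m.+2 + m.+1 by rewrite /ell HV HE HV.
have HT : \sum_(i < ell E) i = \sum_(i < m.+2 + m.+1) i by rewrite Hell.
move: H Hle; rewrite HT Hsplit Hidx HV.
set C := cost _; set X := \sum_(i < m.+2) i; set Y := \sum_(i < m.+2 + m.+1) i.
lia.
Qed.


Theorem theorem4 (n : nat) (V : finType) (E : {set {set V}}) :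
  0 < n -> #|V| = n -> is_tree E ->
  nu_star (path_edges n) <= nu_star E <= nu_star (star_edges n).
Proof.
case: n => [//|[|m]] _ HV Ht.
  have HE : E = set0.
    apply/setP => e; rewrite in_set0; apply/negbTE/negP => He.
    case: Ht => Hg _; have := Hg e He => He2.
    by have := max_card (mem e); rewrite He2 HV.
  have HP : path_edges 1 = set0.
    apply/setP => e; rewrite in_set0 inE; apply/negbTE/negP.
    move=> /existsP [i /existsP [j /andP [/eqP Hj _]]].
    by have := ltn_ord j; rewrite Hj ltnS ltn0.
  by rewrite (nu0 HE) (nu0 HP).
apply/andP; split.
  apply: nu_le => pos Hc.
  have H1 := path_upper Hc.
  have H2 := tree_lower HV Ht.
  move: H1 H2; set C := cost _; set X := \sum_(i < m.+2 + m.+1) i.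
  set Y := \sum_(i < m.+2) i; set Z := \sum_(i < m) i; lia.
apply: nu_le => pos Hc.
have H0 : 0 < #|V| by rewrite HV.
have HE := tree_edges H0 Ht.
case: (Ht) => Hg [Hcon _].
have Hd := deg_pos Hcon (ltac:(rewrite HV; done) : 1 < #|V|).
have H1 := G1 Hg Hd Hc.
have H2 := star_lower m.+1.
have Hell : ell E = m.+2 + m.+1 by rewrite /ell HE HV.
have HT : \sum_(i < ell E) i = \sum_(i < m.+2 + m.+1) i by rewrite Hell.
move: H1 H2; rewrite HT HV.
set C := cost _; set X := \sum_(i < m.+2 + m.+1) i; set Y := \sum_(i < m.+2) i.
lia.
Qed.
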